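(* There exists an action of the free group $F_2$ on two generators on $L_1[0,1]$ by lattice (positive) linear isometries such that there is no equivalent strictly convex norm on $L_1[0,1]$ invariant with respect to this action.
   Context: A norm $\|\cdot\|'$ is invariant with respect to the action if $\|g\cdot f\|'=\|f\|'$ for all $g\in F_2$, $f\in L_1[0,1]$; it is strictly convex if for every $x\neq y$ with $\|x\|'=\|y\|'$ one has $\|\frac{x+y}{2}\|'<\|x\|'$. *)

(* Defs.v *)
(* L_1[0,1] is modelled by real functions on R that are
   Lebesgue-integrable on [0,1], identified up to a.e. equality on [0,1]. *)
From HB Require Import structures.
From mathcomp Require Import all_boot all_order all_algebra.
From mathcomp Require Import all_classical all_reals all_analysis.
Set Implicit Arguments. Unset Strict Implicit. Unset Printing Implicit Defensive.
Import Order.TTheory GRing.Theory Num.Theory.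
Local Open Scope classical_set_scope.
Local Open Scope ring_scope.

Section L1.
Variable R : realType.

Definition I01 : set R := `[0%R, 1%R].

Definition inL1 (f : R -> R) : Prop :=
  (@lebesgue_measure R).-integrable I01 (EFin \o f).

Definition aeq (f g : R -> R) : Prop :=
  {ae (@lebesgue_measure R), forall x, I01 x -> f x = g x}.

Definition L1norm (f : R -> R) : R :=
  fine (\int[@lebesgue_measure R]_(x in I01) (`|f x|)%:E)%E.

Definition op := (R -> R) -> (R -> R).

Definition L1_linear (T : op) : Prop :=
  [/\ forall f, inL1 f -> inL1 (T f),
      forall f g, inL1 f -> inL1 g -> aeq f g -> aeq (T f) (T g),
      forall f g, inL1 f -> inL1 g -> aeq (T (f \+ g)) (T f \+ T g) &
      forall (a : R) f, inL1 f -> aeq (T (fun x => a * f x)) (fun x => a * T f x)].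

Definition lattice_isometry (T : op) : Prop :=
  [/\ L1_linear T,
      forall f, inL1 f -> L1norm (T f) = L1norm f &
      forall f, inL1 f -> aeq (T (fun x => `|f x|)) (fun x => `|T f x|)].

Definition L1_inverse (T S : op) : Prop :=
  (forall f, inL1 f -> aeq (S (T f)) f) /\ (forall f, inL1 f -> aeq (T (S f)) f).

End L1.

(* The free group F_2 on generators a, b: its elements are represented by words
   in the letters a, a^-1, b, b^-1. *)
Inductive letter := La | La_inv | Lb | Lb_inv.

(* An action of F_2 is given by the images of the four letters, where the
   images of a^-1, b^-1 are inverse to those of a, b; a word acts by
   composition. *)
Definition act_word (R : realType) (ops : letter -> op R) (w : seq letter)
  (f : R -> R) : R -> R := foldr (fun l g => ops l g) f w.

Definition F2_lattice_isometric_action (R : realType) (ops : letter -> op R) : Prop :=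
  [/\ forall l, lattice_isometry (ops l),
      L1_inverse (ops La) (ops La_inv) &
      L1_inverse (ops Lb) (ops Lb_inv)].

Definition equivalent_norm (R : realType) (N : (R -> R) -> R) : Prop :=
  [/\ forall f g, inL1 f -> inL1 g -> aeq f g -> N f = N g,
      forall f, inL1 f -> N f = 0 -> aeq f (fun _ => 0),
      forall (a : R) f, inL1 f -> N (fun x => a * f x) = `|a| * N f,
      forall f g, inL1 f -> inL1 g -> N (f \+ g) <= N f + N g &
      exists c C : R, [/\ 0 < c, 0 < C &
        forall f, inL1 f -> c * L1norm f <= N f /\ N f <= C * L1norm f]].

Definition strictly_convex (R : realType) (N : (R -> R) -> R) : Prop :=
  forall x y, inL1 x -> inL1 y -> ~ aeq x y -> N x = N y ->
    N (fun t => (x t + y t) / 2) < N x.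

Definition invariant_norm (R : realType) (ops : letter -> op R) (N : (R -> R) -> R) : Prop :=
  forall (w : seq letter) f, inL1 f -> N (act_word ops w f) = N f.

(* Main.v *)
Require Import Defs.
From HB Require Import structures.
From mathcomp Require Import all_boot all_order all_algebra.
From mathcomp Require Import all_classical all_reals all_analysis.
From mathcomp Require Import measurable_realfun ring lra.
Set Implicit Arguments. Unset Strict Implicit. Unset Printing Implicit Defensive.
Import Order.TTheory GRing.Theory Num.Theory.
Local Open Scope classical_set_scope.
Local Open Scope ring_scope.

Section S.
Variable R : realType.
Local Notation mu := (@lebesgue_measure R).

Lemma push_affine (a b : R) : 0 < a -> forall A, measurable A ->
  mu ((fun x => (a * x + b)%R) @^-1` A) = ((a^-1)%:E * mu A)%E.
Proof.
move=> a0 A mA.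
have mphi : measurable_fun setT (fun x : measurableTypeR R => a * x + b : measurableTypeR R).
  by apply: measurable_funD => //; apply: measurable_funM.
pose pm := measure_function_pushforward__canonical__measure_function_Measure mu mphi.
have : mu A = mscale (NngNum (ltW a0)) pm A.
  apply: lebesgue_measure_unique => //.
  move=> _ [[x y] _ <-].
  change (mu `]x, y] = (a%:E * mu ((fun x => (a * x + b)%R) @^-1` `]x, y]))%E).
  rewrite (_ : _ @^-1` _ = `](x - b) / a, (y - b) / a]%classic); last first.
    apply/seteqP; split => z; rewrite /= !in_itv /=.
      move=> /andP[h1 h2]; apply/andP; split.
        by rewrite ltr_pdivrMr // ltrBlDr mulrC.
      by rewrite ler_pdivlMr // lerBrDr mulrC.
    move=> /andP[h1 h2]; apply/andP; split.
      by move: h1; rewrite ltr_pdivrMr // ltrBlDr mulrC.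
    by move: h2; rewrite ler_pdivlMr // lerBrDr mulrC.
  rewrite !lebesgue_measure_itv /= !lte_fin ltr_pM2r ?invr_gt0 // ltrD2r.
  case: ifPn => _; last by rewrite mule0.
  by rewrite -EFinB -EFinM; congr EFin; field; rewrite gt_eqF.
move=> ->.
change ((mu ((fun x => (a * x + b)%R) @^-1` A)) = ((a^-1)%:E * (a%:E * mu ((fun x => (a * x + b)%R) @^-1` A))))%E.
rewrite muleA -EFinM mulVf ?gt_eqF // mul1e.
by [].
Qed.


Lemma push_affine_neg (a b : R) : a < 0 -> forall A, measurable A ->
  mu ((fun x => a * x + b) @^-1` A) = (((- a)^-1)%:E * mu A)%E.
Proof.
move=> a0 A mA.
have na0 : 0 < - a by rewrite oppr_gt0.
have mphi : measurable_fun setT (fun x : measurableTypeR R => a * x + b : measurableTypeR R).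
  by apply: measurable_funD => //; apply: measurable_funM.
pose pm := measure_function_pushforward__canonical__measure_function_Measure mu mphi.
have : mu A = mscale (NngNum (ltW na0)) pm A.
  apply: lebesgue_measure_unique => //.
  move=> _ [[x y] _ <-].
  change (mu `]x, y] = ((- a)%:E * mu ((fun x => (a * x + b)%R) @^-1` `]x, y]))%E).
  rewrite (_ : _ @^-1` _ = `[(y - b) / a, (x - b) / a[%classic); last first.
    apply/seteqP; split => z; rewrite /= !in_itv /=.
      move=> /andP[h1 h2]; apply/andP; split.
        by rewrite ler_ndivrMr //; nra.
      by rewrite ltr_ndivlMr //; nra.
    move=> /andP[h1 h2]; apply/andP; split.
      by move: h2; rewrite ltr_ndivlMr //; nra.
    by move: h1; rewrite ler_ndivrMr //; nra.
  rewrite !lebesgue_measure_itv /= !lte_fin ltr_nM2r ?invr_lt0 // ltrD2r.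
  case: ifPn => _; last by rewrite mule0.
  by rewrite -EFinB -EFinM; congr EFin; field; rewrite lt_eqF.
move=> ->.
change ((mu ((fun x => (a * x + b)%R) @^-1` A)) = (((- a)^-1)%:E * ((- a)%:E * mu ((fun x => (a * x + b)%R) @^-1` A))))%E.
rewrite muleA -EFinM mulVf ?gt_eqF // mul1e.
by [].
Qed.

Lemma int_affine_gen (a b c : R) (c0 : 0 < c)
  (hpush : forall A, measurable A ->
     mu ((fun x => a * x + b) @^-1` A) = ((c^-1)%:E * mu A)%E)
  (D P : set R) (mD : measurable D)
  (hP : P = (fun x => a * x + b) @^-1` D) (h : R -> R) :
  measurable_fun D h -> (forall y, D y -> 0 <= h y) ->
  (\int[mu]_(x in P) (c * h (a * x + b))%:E = \int[mu]_(y in D) (h y)%:E)%E.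
Proof.
move=> mh h0.
have mphi : measurable_fun setT (fun x : measurableTypeR R => a * x + b : measurableTypeR R).
  by apply: measurable_funD => //; apply: measurable_funM.
have mP : measurable P.
  by rewrite hP -[X in measurable X]setTI; apply: mphi.
have mhphi : measurable_fun P (fun x => h (a * x + b)).
  apply: (measurable_comp mD) => //.
    by rewrite hP => _ [x /= Dx <-].
  exact: measurable_funS mphi.
under eq_integral do rewrite EFinM.
rewrite ge0_integralZl //; last 3 first.
- exact/measurable_EFinP.
- by move=> x; rewrite hP /= => Dx; rewrite lee_fin h0.
- by rewrite lee_fin ltW.
rewrite hP -(@ge0_integral_pushforward _ _ _ _ R _ mphi mu D (EFin \o h) mD); last 2 first.
- exact/measurable_EFinP.
- by move=> y /set_mem Dy; rewrite lee_fin h0.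
have ai : 0 <= c^-1 by rewrite invr_ge0 ltW.
rewrite (eq_measure_integral (mscale (NngNum ai) mu)); last first.
  move=> A mA _.
  change (mu ((fun x => (a * x + b)%R) @^-1` A) = ((c^-1)%:E * mu A)%E).
  exact: hpush.
rewrite ge0_integral_mscale //=; try exact/measurable_EFinP; try (by move=> y Dy; rewrite lee_fin h0).
by rewrite muleA -EFinM mulfV ?gt_eqF // mul1e.
Qed.

Lemma int_affine (a b : R) (a0 : 0 < a) (D P : set R) (mD : measurable D)
  (hP : P = (fun x => a * x + b) @^-1` D) (h : R -> R) :
  measurable_fun D h -> (forall y, D y -> 0 <= h y) ->
  (\int[mu]_(x in P) (a * h (a * x + b))%:E = \int[mu]_(y in D) (h y)%:E)%E.
Proof. by apply: int_affine_gen => //; exact: push_affine. Qed.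

Lemma int_affine_neg (a b : R) (a0 : a < 0) (D P : set R) (mD : measurable D)
  (hP : P = (fun x => a * x + b) @^-1` D) (h : R -> R) :
  measurable_fun D h -> (forall y, D y -> 0 <= h y) ->
  (\int[mu]_(x in P) (- a * h (a * x + b))%:E = \int[mu]_(y in D) (h y)%:E)%E.
Proof. by apply: int_affine_gen => //; [rewrite oppr_gt0|exact: push_affine_neg]. Qed.


Definition wc (w s : R -> R) : op R := fun f x => w x * f (s x).

Record CV (w s : R -> R) : Prop := {
  cv_ge0 : forall x, 0 <= w x;
  cv_meas : forall h : R -> R, measurable_fun ((@I01 R)) h ->
     measurable_fun ((@I01 R)) (fun x => w x * h (s x));
  cv_int : forall h : R -> R, measurable_fun ((@I01 R)) h -> (forall x, (@I01 R) x -> 0 <= h x) ->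
     (\int[mu]_(x in (@I01 R)) (w x * h (s x))%:E = \int[mu]_(x in (@I01 R)) (h x)%:E)%E }.

Lemma mI01 : measurable ((@I01 R)).
Proof. exact: measurable_itv. Qed.

Lemma inL1_meas (f : R -> R) : inL1 f -> measurable_fun ((@I01 R)) f.
Proof. by move=> /integrableP[/measurable_EFinP]. Qed.

Lemma aeq_refl (f g : R -> R) : (forall x, f x = g x) -> aeq f g.
Proof. by move=> fg; apply: aeW => x _; exact: fg. Qed.

Lemma aeq_int (f g : R -> R) : measurable_fun ((@I01 R)) f -> measurable_fun ((@I01 R)) g ->
  aeq f g <-> (\int[mu]_(x in (@I01 R)) (EFin (`|f x - g x|)%R) = 0)%E.
Proof.
move=> mf mg.
have mF : measurable_fun ((@I01 R)) (EFin \o (f \- g)).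
  by apply/measurable_EFinP; apply: measurable_funB.
have := ae_eq_integral_abs mu mI01 mF.
rewrite (_ : (\int[mu]_(x in (@I01 R)) `|(EFin \o (f \- g)%R) x|)%E = 
   (\int[mu]_(x in (@I01 R)) (EFin (`|f x - g x|)%R))%E) //.
have Fae : Filter (nbhs (almost_everywhere mu)) by exact: ae_filter_ringOfSetsType.
move=> ->; rewrite /aeq /ae_eq; split => H.
  have [N [mN N0 HN]] : mu.-negligible (~` [set x | (@I01 R) x -> f x = g x]) := H.
  change (mu.-negligible (~` [set x | (@I01 R) x -> (EFin \o (f \- g)) x = cst 0 x])).
  exists N; split => // x /= Hx; apply: HN => /= h; apply: Hx => Ix.
  by rewrite /= h // subrr.
have [N [mN N0 HN]] : mu.-negligible (~` [set x | (@I01 R) x -> (EFin \o (f \- g)) x = cst 0 x]) := H.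
change (mu.-negligible (~` [set x | (@I01 R) x -> f x = g x])).
exists N; split => // x /= Hx; apply: HN => /= h; apply: Hx => Ix.
by case: (h Ix) => /eqP; rewrite subr_eq0 => /eqP.
Qed.

Lemma CV_lattice_isometry (w s : R -> R) : CV w s -> lattice_isometry (wc w s).
Proof.
move=> [w0 cm ci].
have mT f : inL1 f -> measurable_fun ((@I01 R)) (wc w s f).
  by move=> /inL1_meas; exact: cm.
have normT f : inL1 f -> (\int[mu]_(x in (@I01 R)) (EFin (`|wc w s f x|)%R) = 
                          \int[mu]_(x in (@I01 R)) (EFin (`|f x|)%R))%E.
  move=> /inL1_meas mf.
  rewrite -(ci (fun x => `|f x|)) //; last first.
    exact: measurableT_comp.
  by apply: eq_integral => x _; rewrite /wc normrM (ger0_norm (w0 x)).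
have iT f : inL1 f -> inL1 (wc w s f).
  move=> fi; apply/integrableP; split; first by apply/measurable_EFinP; exact: mT.
  have := normT f fi; rewrite /= => ->.
  by case/integrableP: fi.
split; first split.
- exact: iT.
- move=> f g fi gi /aeq_int fg.
  apply/aeq_int; try exact: mT.
  have := fg (inL1_meas fi) (inL1_meas gi).
  rewrite -(ci (fun x => `|f x - g x|)) //; last first.
    by apply: measurableT_comp => //; apply: measurable_funB; exact: inL1_meas.
  move=> <-; apply: eq_integral => x _.
  by rewrite /wc -mulrBr normrM (ger0_norm (w0 x)).
- by move=> f g _ _; apply: aeq_refl => x; rewrite /wc mulrDr.
- by move=> a f _; apply: aeq_refl => x; rewrite /wc mulrCA.
- by move=> f fi; rewrite /L1norm normT.
- by move=> f _; apply: aeq_refl => x; rewrite /wc normrM (ger0_norm (w0 x)).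
Qed.


Lemma meas_affine_comp (a b : R) (D P : set R) (h : R -> R) : measurable D ->
  (forall x, P x -> D (a * x + b)) -> measurable_fun D h ->
  measurable_fun P (fun x => h (a * x + b)).
Proof.
move=> mD PD mh.
have mphi : measurable_fun setT (fun x : R => a * x + b).
  by apply: measurable_funD => //; apply: measurable_funM.
apply: (measurable_comp mD) => //.
  by move=> _ [x Px <-]; exact: PD.
exact: measurable_funS mphi.
Qed.

Lemma CV_refl : CV (fun _ => 1) (fun x => 1 - x).
Proof.
have hI : (@I01 R) = (fun x => -1 * x + 1) @^-1` (@I01 R).
  apply/seteqP; split => x; rewrite /I01 /= !in_itv /= => /andP[h1 h2];
    apply/andP; split; lra.
split.
- by move=> _; exact: ler01.
- move=> h mh; apply: measurable_funM => //.
  rewrite (_ : (fun x => h (1 - x)) = (fun x => h (-1 * x + 1))); last first.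
    by apply/funext => x; rewrite mulN1r addrC.
  apply: meas_affine_comp mI01 _ mh => x.
  by rewrite {1}hI.
- move=> h mh h0.
  rewrite -(int_affine_neg (a := -1) (b := 1) _ mI01 hI mh h0); last by rewrite ltrN10.
  by apply: eq_integral => x _; rewrite opprK !mul1r mulN1r addrC.
Qed.


Lemma CV_pw (s0 t0 a1 b1 a2 b2 : R) : 0 < a1 -> 0 < a2 ->
  `[0, s0[%classic = (fun x => a1 * x + b1) @^-1` `[0, t0[%classic ->
  `[s0, 1]%classic = (fun x => a2 * x + b2) @^-1` `[t0, 1]%classic ->
  (@I01 R) = `[0, s0[%classic `|` `[s0, 1]%classic ->
  (@I01 R) = `[0, t0[%classic `|` `[t0, 1]%classic ->
  CV (fun x => if x < s0 then a1 else a2)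
     (fun x => if x < s0 then a1 * x + b1 else a2 * x + b2).
Proof.
move=> a10 a20 hP1 hP2 hs ht.
have dis (u : R) : [disjoint `[0, u[%classic & `[u, 1]%classic].
  rewrite disj_set2E; apply/eqP/seteqP; split => // x [] /=; rewrite !in_itv /=.
  by move=> /andP[_ h1] /andP[h2 _]; lra.
have sub1 : `[0, t0[%classic `<=` (@I01 R) by rewrite ht; exact: subsetUl.
have sub2 : `[t0, 1]%classic `<=` (@I01 R) by rewrite ht; exact: subsetUr.
have P1lt x : `[0, s0[%classic x -> x < s0.
  by rewrite /= in_itv /= => /andP[].
have P2ge x : `[s0, 1]%classic x -> (x < s0) = false.
  by rewrite /= in_itv /= => /andP[h _]; apply/negbTE; rewrite -leNgt.
have meas : forall h : R -> R, measurable_fun (@I01 R) h ->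
    measurable_fun (@I01 R) (fun x => (if x < s0 then a1 else a2) *
                     h (if x < s0 then a1 * x + b1 else a2 * x + b2)).
  move=> h mh; rewrite {1}hs; apply/measurable_funU => //; split.
  - apply: (eq_measurable_fun (fun x => a1 * h (a1 * x + b1))).
      by move=> x /set_mem /P1lt ->.
    apply: measurable_funM => //.
    apply: (meas_affine_comp mI01) mh => x.
    by rewrite {1}hP1 => /sub1.
  - apply: (eq_measurable_fun (fun x => a2 * h (a2 * x + b2))).
      by move=> x /set_mem /P2ge ->.
    apply: measurable_funM => //.
    apply: (meas_affine_comp mI01) mh => x.
    by rewrite {1}hP2 => /sub2.
split.
- by move=> x; case: ifP => _; exact: ltW.
- exact: meas.
- move=> h mh h0.
  rewrite {1}hs ge0_integral_setU //; last 2 first.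
  + by rewrite -hs; apply/measurable_EFinP; exact: meas.
  + move=> x [Px|Px]; rewrite lee_fin.
    * rewrite (P1lt _ Px); apply: mulr_ge0; first exact: ltW.
      by apply: h0; apply: sub1; move: Px; rewrite {1}hP1.
    * rewrite (P2ge _ Px); apply: mulr_ge0; first exact: ltW.
      by apply: h0; apply: sub2; move: Px; rewrite {1}hP2.
  under eq_integral => x /set_mem Px do rewrite (P1lt _ Px).
  under [X in (_ + X)%E]eq_integral => x /set_mem Px do rewrite (P2ge _ Px).
  have mh1 : measurable_fun `[0, t0[%classic h by exact: measurable_funS mI01 sub1 mh.
  have mh2 : measurable_fun `[t0, 1]%classic h by exact: measurable_funS mI01 sub2 mh.
  have h01 : forall y, `[0, t0[%classic y -> 0 <= h y by move=> y /sub1; exact: h0.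
  have h02 : forall y, `[t0, 1]%classic y -> 0 <= h y by move=> y /sub2; exact: h0.
  rewrite (int_affine a10 (measurable_itv _) hP1 mh1 h01).
  rewrite (int_affine a20 (measurable_itv _) hP2 mh2 h02).
  rewrite ht ge0_integral_setU //.
  + by rewrite -ht; exact/measurable_EFinP.
  + by move=> x; rewrite -ht => Ix; rewrite lee_fin h0.
Qed.


Lemma I01_split (u : R) : 0 <= u -> u <= 1 ->
  (@I01 R) = `[0, u[%classic `|` `[u, 1]%classic.
Proof.
move=> u0 u1; apply/seteqP; split => x.
  rewrite /I01 /= !in_itv /= => /andP[h1 h2].
  have [xu|xu] := ltP x u; [left|right]; apply/andP; split => //.
by rewrite /I01 /= !in_itv /= => -[] /andP[h1 h2]; apply/andP; split; lra.
Qed.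

Definition op_r : op R := wc (fun _ => 1) (fun x => 1 - x).
Definition op_b : op R := wc (fun x => if x < 2^-1 then 2^-1 else 3 / 2)
  (fun x => if x < 2^-1 then 2^-1 * x + 0 else 3 / 2 * x + (- 2^-1)).
Definition op_bi : op R := wc (fun x => if x < 4^-1 then 2 else 2 / 3)
  (fun x => if x < 4^-1 then 2 * x + 0 else 2 / 3 * x + 3^-1).

Lemma CV_b : CV (fun x => if x < 2^-1 then 2^-1 else 3 / 2)
  (fun x => if x < 2^-1 then 2^-1 * x + 0 else 3 / 2 * x + (- 2^-1)).
Proof.
apply: CV_pw; [lra|lra| | |apply: I01_split; lra|apply: (@I01_split 4^-1); lra].
- apply/seteqP; split => x; rewrite /= !in_itv /= => /andP[h1 h2];
    apply/andP; split; lra.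
- apply/seteqP; split => x; rewrite /= !in_itv /= => /andP[h1 h2];
    apply/andP; split; lra.
Qed.

Lemma CV_bi : CV (fun x => if x < 4^-1 then 2 else 2 / 3)
  (fun x => if x < 4^-1 then 2 * x + 0 else 2 / 3 * x + 3^-1).
Proof.
apply: CV_pw; [lra|lra| | |apply: I01_split; lra|apply: (@I01_split 2^-1); lra].
- apply/seteqP; split => x; rewrite /= !in_itv /= => /andP[h1 h2];
    apply/andP; split; lra.
- apply/seteqP; split => x; rewrite /= !in_itv /= => /andP[h1 h2];
    apply/andP; split; lra.
Qed.

Lemma aux_inv (a b e y : R) (f : R -> R) : a * b = 1 -> e = y -> a * (b * f e) = f y.
Proof. by move=> ab ->; rewrite mulrA ab mul1r. Qed.

Lemma b_bi f x : op_b (op_bi f) x = f x.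
Proof.
rewrite /op_b /op_bi /wc.
by repeat (case: ifPn => [?|]; last rewrite -leNgt => ?); try (exfalso; lra);
  apply: aux_inv; lra.
Qed.

Lemma bi_b f x : op_bi (op_b f) x = f x.
Proof.
rewrite /op_b /op_bi /wc.
by repeat (case: ifPn => [?|]; last rewrite -leNgt => ?); try (exfalso; lra);
  apply: aux_inv; lra.
Qed.

Lemma r_r f x : op_r (op_r f) x = f x.
Proof. by rewrite /op_r /wc !mul1r; congr f; lra. Qed.


Lemma inL1_cst (k : R) : inL1 (fun _ : R => k).
Proof.
apply/integrableP; split; first exact/measurable_EFinP.
rewrite (eq_integral (cst (`|k|)%:E)) //.
rewrite integral_cst; last exact: mI01.
change ((`|k|)%:E * (@lebesgue_measure R) (@I01 R) < +oo)%E.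
rewrite /I01 lebesgue_measure_itv /= lte_fin ltr01 oppr0 adde0 -EFinM.
exact: ltry.
Qed.

Definition ops : letter -> op R := fun l =>
  match l with La | La_inv => op_r | Lb => op_b | Lb_inv => op_bi end.

Lemma ops_action : F2_lattice_isometric_action ops.
Proof.
split.
- case; apply: CV_lattice_isometry; [exact: CV_refl|exact: CV_refl|exact: CV_b|exact: CV_bi].
- by split => f _; apply: aeq_refl => x; exact: r_r.
- by split => f _; apply: aeq_refl => x; [exact: bi_b|exact: b_bi].
Qed.

Lemma no_norm : ~ (exists N : (R -> R) -> R,
         [/\ equivalent_norm N, strictly_convex N & invariant_norm ops N]).
Proof.
move=> [N [[Nae _ _ _ _] Nsc Ninv]].
pose one := fun _ : R => 1 : R.
have i1 : inL1 one := inL1_cst 1.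
have [hl _ _] := ops_action.
have iT l f : inL1 f -> inL1 (ops l f).
  by case: (hl l) => -[H _ _ _] _ _; exact: H.
have ip : inL1 (op_b one) := iT Lb one i1.
have iq : inL1 (op_r (op_b one)) := iT La _ ip.
have Np : N (op_b one) = N one := Ninv [:: Lb] one i1.
have Nq : N (op_r (op_b one)) = N one := Ninv [:: La; Lb] one i1.
pose mid := fun t => (op_b one t + op_r (op_b one) t) / 2.
have imid : inL1 mid.
  have h := @integrableZl _ (measurableTypeR R) R (@lebesgue_measure R) (@I01 R) mI01 (2^-1) _
     (@integrableD _ (measurableTypeR R) R (@lebesgue_measure R) (@I01 R) mI01 _ _ ip iq).
  apply: (@eq_integrable _ (measurableTypeR R) R (@lebesgue_measure R) (@I01 R) mI01 _ _ _ h) => x _.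
  by rewrite /mid /= -EFinD -EFinM mulrC.
have amid : aeq mid one.
  exists [set 2^-1]; split => //; first exact: lebesgue_measure_set1.
  move=> x /= Hx; apply: contrapT => /eqP x2; apply: Hx => _.
  rewrite /mid /op_b /op_r /wc /one.
  by repeat (case: ifPn => [?|]; last rewrite -leNgt => ?); try (exfalso; lra); lra.
have Nmid : N mid = N one := Nae _ _ imid i1 amid.
have npq : ~ aeq (op_b one) (op_r (op_b one)).
  move=> [A [mA A0 HA]].
  have sub : `[0, 2^-1[%classic `<=` A.
    move=> x; rewrite /= in_itv /= => /andP[h1 h2]; apply: HA => /=.
    move/(_ _); rewrite /I01 /= in_itv /=.
    have -> : (0 <= x <= 1) = true by apply/andP; split; lra.
    move=> /(_ isT); rewrite /op_b /op_r /wc /one.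
    by repeat (case: ifPn => [?|]; last rewrite -leNgt => ?); try (exfalso; lra); lra.
  have H := le_measure (@lebesgue_measure R) (mem_set (measurable_itv `[0, 2^-1[)) (mem_set mA) sub.
  have : ((@lebesgue_measure R) `[0%R, 2^-1%R[%classic <= (@lebesgue_measure R) A)%E := H.
  rewrite A0 lebesgue_measure_itv /= lte_fin.
  have -> : (0 < 2^-1 :> R) = true by apply/idP; lra.
  by rewrite sube0 lee_fin; lra.
have := Nsc _ _ ip iq npq (etrans Np (esym Nq)).
by rewrite -/mid Nmid Np ltxx.
Qed.

End S.

Theorem proposition5p1 (R : realType) :
  exists ops : letter -> op R,
    F2_lattice_isometric_action ops /\
    ~ (exists N : (R -> R) -> R,
         [/\ equivalent_norm N, strictly_convex N & invariant_norm ops N]).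
Proof. exists (@ops R); split; [exact: ops_action|exact: no_norm]. Qed.
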